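(* Let $X:\Omega\to\mathbb{R}^3$ be a timelike minimal surface in $\mathbb{L}^3$ which is a smooth graph over a timelike plane $P$ (through the origin). Let $\{b_2,b_3\}$ be a basis of $P$ orthonormal with respect to $\langle\cdot,\cdot\rangle$, with $b_2$ spacelike and $b_3$ timelike, and let $b_1=N$ be the unit spacelike normal of $P$, so that $\{b_1,b_2,b_3\}$ is an orthonormal basis of $\mathbb{L}^3$. Writing the surface, via the inverse of the (diffeomorphic) orthogonal projection onto $P$, as $X(x_2,x_3)$ over points $x_2b_2+x_3b_3$ of $P$, define $\psi(x_2,x_3)=\langle X(x_2,x_3),N\rangle$, so that $X(x_2,x_3)=\psi(x_2,x_3)N+x_2b_2+x_3b_3$. Then $\psi$ satisfies the Born-Infeld equation in the variables $x_2,x_3$, i.e. $\psi$ is a Born-Infeld soliton.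
   Context: $\mathbb{L}^3$ denotes $\mathbb{R}^3$ with the metric $\langle\cdot,\cdot\rangle$ given by $ds^2=dx^2+dy^2-dz^2$. A surface is timelike if its induced metric is Lorentzian, minimal if its mean curvature vanishes. A function $\psi$ on an open set of the $(u,v)$-plane is a Born-Infeld soliton (in the variables $u,v$) if $(1-\psi_v^2)\psi_{uu}+2\psi_u\psi_v\psi_{uv}-(1+\psi_u^2)\psi_{vv}=0$. *)

(* Defs.v *)
From Stdlib Require Import Reals List.
From Coquelicot Require Import Coquelicot.
Open Scope R_scope.

Definition vec := (R * R * R)%type.
Definition vx (a : vec) : R := fst (fst a).
Definition vy (a : vec) : R := snd (fst a).
Definition vz (a : vec) : R := snd a.
Definition mkvec (x y z : R) : vec := ((x, y), z).
Definition vadd (a b : vec) : vec := mkvec (vx a + vx b) (vy a + vy b) (vz a + vz b).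
Definition vscal (c : R) (a : vec) : vec := mkvec (c * vx a) (c * vy a) (c * vz a).

Definition ldot (a b : vec) : R := vx a * vx b + vy a * vy b - vz a * vz b.

(* Lorentzian cross product: ldot (lcross a b) c = det(a, b, c). *)
Definition lcross (a b : vec) : vec :=
  mkvec (vy a * vz b - vz a * vy b)
        (vz a * vx b - vx a * vz b)
        (- (vx a * vy b - vy a * vx b)).

Definition pd1 (f : R -> R -> R) (u v : R) : R := Derive (fun t => f t v) u.
Definition pd2 (f : R -> R -> R) (u v : R) : R := Derive (fun t => f u t) v.

Fixpoint iter_pd (l : list bool) (f : R -> R -> R) : R -> R -> R :=
  match l with
  | nil => f
  | b :: l' => (if b then pd1 else pd2) (iter_pd l' f)
  end.

Definition smooth_on (U : R * R -> Prop) (f : R -> R -> R) : Prop :=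
  forall (l : list bool) (u v : R), U (u, v) ->
    continuous (fun p : R * R => iter_pd l f (fst p) (snd p)) (u, v) /\
    ex_derive (fun t => iter_pd l f t v) u /\
    ex_derive (fun t => iter_pd l f u t) v.

Definition vpd1 (X : R -> R -> vec) (u v : R) : vec :=
  mkvec (pd1 (fun a b => vx (X a b)) u v) (pd1 (fun a b => vy (X a b)) u v)
        (pd1 (fun a b => vz (X a b)) u v).
Definition vpd2 (X : R -> R -> vec) (u v : R) : vec :=
  mkvec (pd2 (fun a b => vx (X a b)) u v) (pd2 (fun a b => vy (X a b)) u v)
        (pd2 (fun a b => vz (X a b)) u v).

Definition fE X u v := ldot (vpd1 X u v) (vpd1 X u v).
Definition fF X u v := ldot (vpd1 X u v) (vpd2 X u v).
Definition fG X u v := ldot (vpd2 X u v) (vpd2 X u v).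

Definition timelike_at (X : R -> R -> vec) (u v : R) : Prop :=
  fE X u v * fG X u v - fF X u v ^ 2 < 0.

(* Unit normal (spacelike for a timelike surface). *)
Definition unit_normal (X : R -> R -> vec) (u v : R) : vec :=
  let n0 := lcross (vpd1 X u v) (vpd2 X u v) in
  vscal (/ sqrt (ldot n0 n0)) n0.

Definition sL X u v := ldot (vpd1 (vpd1 X) u v) (unit_normal X u v).
Definition sM X u v := ldot (vpd2 (vpd1 X) u v) (unit_normal X u v).
Definition sN X u v := ldot (vpd2 (vpd2 X) u v) (unit_normal X u v).

Definition mean_curvature (X : R -> R -> vec) (u v : R) : R :=
  (fE X u v * sN X u v - 2 * fF X u v * sM X u v + fG X u v * sL X u v)
  / (2 * (fE X u v * fG X u v - fF X u v ^ 2)).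

Definition born_infeld_at (psi : R -> R -> R) (u v : R) : Prop :=
  (1 - pd2 psi u v ^ 2) * pd1 (pd1 psi) u v
  + 2 * pd1 psi u v * pd2 psi u v * pd2 (pd1 psi) u v
  - (1 + pd1 psi u v ^ 2) * pd2 (pd2 psi) u v = 0.

(* Main.v *)
Require Import Defs.
From Stdlib Require Import Reals Lra Psatz List.
From Coquelicot Require Import Coquelicot.
Open Scope R_scope.

Lemma loc12 (U : R*R -> Prop) u v : open U -> U (u,v) ->
  locally u (fun t => U (t,v)) /\ locally v (fun t => U (u,t)).
Proof.
intros HU H.
destruct (HU _ H) as [eps He]. split; exists eps; intros t Ht; apply He; split; simpl;
  try exact Ht; apply ball_center.
Qed.

Lemma pd_lin (U : R*R -> Prop) (f h : R -> R -> R) (al be ga de : R) :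
  open U -> (forall a b, U (a,b) -> f a b = h a b * al + a * be + b * ga + de) ->
  forall u v, U (u,v) -> ex_derive (fun t => h t v) u -> ex_derive (fun t => h u t) v ->
  pd1 f u v = pd1 h u v * al + be /\ pd2 f u v = pd2 h u v * al + ga.
Proof.
intros HU Hf u v Huv H1 H2.
destruct (loc12 U u v HU Huv) as [L1 L2].
split.
- unfold pd1. rewrite (Derive_ext_loc _ (fun t => h t v * al + t * be + v * ga + de)).
  + apply is_derive_unique. auto_derive; auto. rewrite !Rmult_1_l; reflexivity.
  + eapply filter_imp; [|exact L1]. intros t Ht; simpl; apply Hf; exact Ht.
- unfold pd2. rewrite (Derive_ext_loc _ (fun t => h u t * al + u * be + t * ga + de)).
  + apply is_derive_unique. auto_derive; auto. rewrite !Rmult_1_l; reflexivity.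
  + eapply filter_imp; [|exact L2]. intros t Ht; simpl; apply Hf; exact Ht.
Qed.

Lemma comp_lemma (proj : vec -> R)
  (Hadd : forall a b, proj (vadd a b) = proj a + proj b)
  (Hsc : forall c a, proj (vscal c a) = c * proj a)
  (b1 b2 b3 : vec) (U : R * R -> Prop) (HU : open U)
  (X : R -> R -> vec) (psi : R -> R -> R)
  (HX : forall x2 x3, U (x2, x3) ->
        X x2 x3 = vadd (vscal (psi x2 x3) b1) (vadd (vscal x2 b2) (vscal x3 b3)))
  (Hsmooth : smooth_on U psi) u v : U (u,v) ->
  let F := fun a b => proj (X a b) in
  pd1 F u v = pd1 psi u v * proj b1 + proj b2 /\
  pd2 F u v = pd2 psi u v * proj b1 + proj b3 /\
  pd1 (pd1 F) u v = pd1 (pd1 psi) u v * proj b1 /\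
  pd2 (pd1 F) u v = pd2 (pd1 psi) u v * proj b1 /\
  pd2 (pd2 F) u v = pd2 (pd2 psi) u v * proj b1.
Proof.
intros Huv F.
assert (E0 : forall a b, U (a,b) -> F a b = psi a b * proj b1 + a * proj b2 + b * proj b3 + 0).
{ intros a b H. unfold F. rewrite HX by exact H. rewrite !Hadd, !Hsc. ring. }
assert (D0 : forall a b, U (a,b) -> pd1 F a b = pd1 psi a b * proj b1 + proj b2 /\
                                     pd2 F a b = pd2 psi a b * proj b1 + proj b3).
{ intros a b H. destruct (Hsmooth nil a b H) as [_ [H1 H2]].
  exact (pd_lin U F psi _ _ _ _ HU E0 a b H H1 H2). }
destruct (D0 u v Huv) as [A1 A2].
destruct (Hsmooth (true :: nil) u v Huv) as [_ [P1 P2]].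
destruct (Hsmooth (false :: nil) u v Huv) as [_ [Q1 Q2]].
simpl in P1, P2, Q1, Q2.
destruct (pd_lin U (pd1 F) (pd1 psi) (proj b1) 0 0 (proj b2) HU) with (u := u) (v := v)
  as [B1 B2]; auto.
{ intros a b H. rewrite (proj1 (D0 a b H)). ring. }
destruct (pd_lin U (pd2 F) (pd2 psi) (proj b1) 0 0 (proj b3) HU) with (u := u) (v := v)
  as [C1 C2]; auto.
{ intros a b H. rewrite (proj2 (D0 a b H)). ring. }
repeat split; auto.
- rewrite B1; ring.
- rewrite B2; ring.
- rewrite C2; ring.
Qed.

Lemma ldot_addl a b c : ldot (vadd a b) c = ldot a c + ldot b c.
Proof. unfold ldot, vadd, vx, vy, vz, mkvec; simpl; ring. Qed.
Lemma ldot_scall k a c : ldot (vscal k a) c = k * ldot a c.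
Proof. unfold ldot, vscal, vx, vy, vz, mkvec; simpl; ring. Qed.
Lemma ldot_sym a b : ldot a b = ldot b a.
Proof. unfold ldot; ring. Qed.
Lemma lcross_norm a b : ldot (lcross a b) (lcross a b) =
  - (ldot a a * ldot b b - ldot a b ^ 2).
Proof. unfold ldot, lcross, vx, vy, vz, mkvec; simpl; ring. Qed.
Lemma det_shift b1 b2 b3 p q :
  ldot b1 (lcross (vadd (vscal p b1) b2) (vadd (vscal q b1) b3)) = ldot b1 (lcross b2 b3).
Proof. unfold ldot, lcross, vadd, vscal, vx, vy, vz, mkvec; simpl; ring. Qed.
Lemma gram a b c :
  ldot a a * (ldot b b * ldot c c - ldot b c ^ 2)
  - ldot a b * (ldot a b * ldot c c - ldot b c * ldot a c)
  + ldot a c * (ldot a b * ldot b c - ldot b b * ldot a c)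
  = - (ldot a (lcross b c)) ^ 2.
Proof. unfold ldot, lcross, vx, vy, vz, mkvec; simpl; ring. Qed.

Lemma ldot_comb p q a b c : ldot (vadd (vscal p a) b) (vadd (vscal q a) c) =
  p * q * ldot a a + p * ldot a c + q * ldot a b + ldot b c.
Proof. unfold ldot, vadd, vscal, vx, vy, vz, mkvec; simpl; ring. Qed.
Lemma ldot_ss k c a n : ldot (vscal k a) (vscal c n) = k * c * ldot a n.
Proof. unfold ldot, vscal, vx, vy, vz, mkvec; simpl; ring. Qed.

Theorem lemma3p1
  (b1 b2 b3 : vec)
  (Hb1 : ldot b1 b1 = 1) (Hb2 : ldot b2 b2 = 1) (Hb3 : ldot b3 b3 = -1)
  (Hb12 : ldot b1 b2 = 0) (Hb13 : ldot b1 b3 = 0) (Hb23 : ldot b2 b3 = 0)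
  (U : R * R -> Prop) (HU : open U)
  (X : R -> R -> vec) (psi : R -> R -> R)
  (Hpsi_def : forall x2 x3, U (x2, x3) -> psi x2 x3 = ldot (X x2 x3) b1)
  (HX : forall x2 x3, U (x2, x3) ->
        X x2 x3 = vadd (vscal (psi x2 x3) b1) (vadd (vscal x2 b2) (vscal x3 b3)))
  (Hsmooth : smooth_on U psi)
  (Htimelike : forall x2 x3, U (x2, x3) -> timelike_at X x2 x3)
  (Hminimal : forall x2 x3, U (x2, x3) -> mean_curvature X x2 x3 = 0) :
  forall x2 x3, U (x2, x3) -> born_infeld_at psi x2 x3.
Proof.
intros u v Huv.
destruct (comp_lemma vx (fun _ _ => eq_refl) (fun _ _ => eq_refl) b1 b2 b3 U HU X psi HX Hsmooth u v Huv)
  as [X1 [X2 [X3 [X4 X5]]]].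
destruct (comp_lemma vy (fun _ _ => eq_refl) (fun _ _ => eq_refl) b1 b2 b3 U HU X psi HX Hsmooth u v Huv)
  as [Y1 [Y2 [Y3 [Y4 Y5]]]].
destruct (comp_lemma vz (fun _ _ => eq_refl) (fun _ _ => eq_refl) b1 b2 b3 U HU X psi HX Hsmooth u v Huv)
  as [Z1 [Z2 [Z3 [Z4 Z5]]]].
set (p := pd1 psi u v) in *. set (q := pd2 psi u v) in *.
assert (V1 : vpd1 X u v = vadd (vscal p b1) b2).
{ unfold vpd1. rewrite X1, Y1, Z1. reflexivity. }
assert (V2 : vpd2 X u v = vadd (vscal q b1) b3).
{ unfold vpd2. rewrite X2, Y2, Z2. reflexivity. }
assert (V11 : vpd1 (vpd1 X) u v = vscal (pd1 (pd1 psi) u v) b1).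
{ unfold vscal; rewrite <- X3, <- Y3, <- Z3; reflexivity. }
assert (V12 : vpd2 (vpd1 X) u v = vscal (pd2 (pd1 psi) u v) b1).
{ unfold vscal; rewrite <- X4, <- Y4, <- Z4; reflexivity. }
assert (V22 : vpd2 (vpd2 X) u v = vscal (pd2 (pd2 psi) u v) b1).
{ unfold vscal; rewrite <- X5, <- Y5, <- Z5; reflexivity. }
pose proof (Hminimal u v Huv) as Hm; pose proof (Htimelike u v Huv) as Ht.
unfold timelike_at, fE, fF, fG in Ht. rewrite V1, V2 in Ht.
unfold mean_curvature, fE, fF, fG, sL, sM, sN, unit_normal in Hm. cbv zeta in Hm.
rewrite V11, V12, V22, V1, V2 in Hm.
rewrite lcross_norm in Hm.
rewrite !ldot_ss, !det_shift in Hm.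
rewrite !ldot_comb in Ht, Hm.
rewrite Hb1, Hb2, Hb3, Hb12, Hb13, Hb23 in Ht, Hm.
pose proof (gram b1 b2 b3) as Hg.
rewrite Hb1, Hb2, Hb3, Hb12, Hb13, Hb23 in Hg.
set (D := ldot b1 (lcross b2 b3)) in *.
set (W := (p * p * 1 + p * 0 + p * 0 + 1) * (q * q * 1 + q * 0 + q * 0 + -1) -
          (p * q * 1 + p * 0 + q * 0 + 0) ^ 2) in *.
assert (HW : W < 0) by exact Ht.
assert (Hs : 0 < sqrt (- W)) by (apply sqrt_lt_R0; lra).
set (c := / sqrt (-W)) in *.
assert (Hc : 0 < c) by (apply Rinv_0_lt_compat; exact Hs).
assert (HD : D <> 0) by (intro H0; rewrite H0 in Hg; lra).
unfold W in Hm, HW. unfold born_infeld_at. fold p q.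
set (a := pd1 (pd1 psi) u v) in *. set (b := pd2 (pd1 psi) u v) in *. set (d := pd2 (pd2 psi) u v) in *.
unfold Rdiv in Hm. apply Rmult_integral in Hm. destruct Hm as [Hm|Hm].
- assert (Hcd : c * D * ((1 - q ^ 2) * a + 2 * p * q * b - (1 + p ^ 2) * d) = 0)
    by (rewrite <- (Ropp_involutive 0), Ropp_0, <- Hm; ring).
  apply Rmult_integral in Hcd. destruct Hcd as [Hcd|Hcd]; [|exact Hcd].
  apply Rmult_integral in Hcd. destruct Hcd; [lra | contradiction].
- exfalso. revert Hm. apply Rinv_neq_0_compat. lra.
Qed.
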